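(* Let $X$ be a set and $F,F'$ forests of planar binary trees with leaves decorated by $X$, with $F'=T_1\cdots T_k$, $k\ge1$. Then in $T(\mathrm{Mag}(X))$: $F*F'=\sum_{\sigma\in S_k}(-1)^{O(\sigma)+k}\,F\curvearrowleft\Psi_{F'}(\sigma)$, where $O(\sigma)$ is the number of orbits of $\sigma$ on $\{1,\dots,k\}$.
   Context: Trees/forests: $\mathrm{Mag}(X)$ is identified with the span of planar rooted binary trees with leaves decorated by $X$, magmatic product $T_1*T_2=T_1\vee T_2$ (graft $T_1,T_2$ as left and right subtrees of a new root); $T(\mathrm{Mag}(X))$ has basis the forests, product concatenation, trees primitive, and $*$ extended as the unique bilinear map with, for all $f,g,h$ and trees $y$: $\varepsilon(f*g)=\varepsilon(f)\varepsilon(g)$; $\Delta(f*g)=\Delta(f)*\Delta(g)$; $f*1=f$; $1*f=\varepsilon(f)1$; $f*(gy)=(f*g)*y-f*(g*y)$; $(fg)*h=(f*h^{(1)})(g*h^{(2)})$; $(f*g)*h=f*\big((g*h^{(1)})h^{(2)}\big)$. For forests $F=F_1\cdots F_p$, $S=S_1\cdots S_n$: $F\curvearrowleft S_1=\sum_iF_1\cdots(F_i\vee S_1)\cdots F_p$ and $F\curvearrowleft S=(F\curvearrowleft S_1\cdots S_{n-1})*S_n$. Labelled skeleton: for a word $w$ of distinct positive integers define a planar binary tree with internal nodes labelled by the letters of $w$ recursively: the empty word gives the single leaf $|$, and if $w=w'\,m\,w''$ with $m=\min(w)$, the tree is the one with root labelled $m$, left subtree that of $w'$ and right subtree that of $w''$.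 $\Psi_{F'}(\sigma)$: let $O_1,\dots,O_r$ be the orbits of $\sigma$ ordered by increasing minimum. For an orbit $O=\{o\}$ of size one, the associated tree is $T_o$. For an orbit $O$ of size $m\ge2$ with minimum $o$, let $c_1=o$, $c_{j+1}=\sigma(c_j)$, $\tau=c_2c_3\cdots c_m$, and take the labelled skeleton of $\tau$ (which has $m$ leaves); graft $T_o$ on its leftmost leaf and, for each internal node labelled $c$, graft $T_c$ on the leftmost leaf of the right subtree of that node. $\Psi_{F'}(\sigma)$ is the forest of the $r$ trees so obtained, in the order of $O_1,\dots,O_r$. *)

(* Defs.v *)
From Stdlib Require Import ClassicalEpsilon.
From mathcomp Require Import all_boot all_order all_algebra all_fingroup.
Set Implicit Arguments.
Unset Strict Implicit.
Unset Printing Implicit Defensive.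
Import GRing.Theory.
Local Open Scope ring_scope.

(* Planar rooted binary trees with leaves decorated by X.
   [Node l r] is the magmatic product l \vee r. *)
Inductive tree (X : Type) : Type :=
  | Leaf : X -> tree X
  | Node : tree X -> tree X -> tree X.
Arguments Leaf {X} _.
Arguments Node {X} _ _.

(* Forests: words of trees (basis of T(Mag(X))); the empty forest is 1. *)
Definition forest (X : Type) := seq (tree X).

Section Lin.
Variables (R : fieldType) (X : Type).

(* Elements of T(Mag(X)) (coefficients in R) as finite formal sums. *)
Definition lin := seq (R * forest X).

(* Classical decision of equality of forests (X is an arbitrary set). *)
Definition decP (P : Prop) : bool :=
  if excluded_middle_informative P then true else false.

Definition coef (v : lin) (G : forest X) : R :=
  \sum_(p <- v) (if decP (p.2 = G) then p.1 else 0).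

Definition lin_eq (v w : lin) : Prop := forall G, coef v G = coef w G.

Definition scale (c : R) (v : lin) : lin := [seq (c * p.1, p.2) | p <- v].
Definition lopp (v : lin) : lin := scale (-1) v.

Fixpoint graft1 (F : forest X) (S : tree X) : lin :=
  match F with
  | [::] => [::]
  | t :: F' => (1, Node t S :: F') :: [seq (p.1, t :: p.2) | p <- graft1 F' S]
  end.

Definition graft_lin (v : lin) (S : tree X) : lin :=
  flatten [seq scale p.1 (graft1 p.2 S) | p <- v].

(* The product * of T(Mag(X)) on basis forests f, g, computed by the
   defining relations: f * 1 = f and f * (g y) = (f * g) * y - f * (g * y)
   for a tree y, where for a tree y, (f_1 ... f_p) * y = sum_i f_1 ..
   (f_i \vee y) .. f_p (from (fg)*h = (f*h^(1))(g*h^(2)), Delta y =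
   y(x)1 + 1(x)y, 1*y = eps(y) 1 = 0, and tree*tree = \vee).
   [n] is fuel, equal to [size g]. *)
Fixpoint starn (n : nat) (f g : forest X) : lin :=
  match n with
  | 0 => [:: (1, f)]
  | n'.+1 =>
      match rev g with
      | [::] => [:: (1, f)]
      | y :: rg' =>
          let g' := rev rg' in
          graft_lin (starn n' f g') y ++
          lopp (flatten [seq scale p.1 (starn n' f p.2) | p <- graft1 g' y])
      end
  end.

Definition star (f g : forest X) : lin := starn (size g) f g.

Definition graft_forest (F S : forest X) : lin :=
  foldl graft_lin [:: (1, F)] S.

End Lin.

(* Labelled skeleton of a word w of distinct naturals, with tree [lf]
   grafted on its leftmost leaf and, for each internal node labelled c,
   the tree [T c] grafted on the leftmost leaf of its right subtree.
   Fuel [n] (>= size w). *)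
Fixpoint skel (X : Type) (T : nat -> tree X) (n : nat) (w : seq nat)
    (lf : tree X) : tree X :=
  match n with
  | 0 => lf
  | n'.+1 =>
      match w with
      | [::] => lf
      | a :: _ =>
          let m := foldr minn a w in
          let i := index m w in
          Node (skel T n' (take i w) lf) (skel T n' (drop i.+1 w) (T m))
      end
  end.

Section Psi.
Variables (X : Type) (t0 : tree X) (F' : forest X).
Local Notation k := (size F').

(* Trees of F' indexed from 0: T_c = nth c F' (label c here is c+1 in the
   paper; the shift preserves all minima/orderings). *)
Definition Tl (c : nat) : tree X := nth t0 F' c.

Definition orbit_min (s : {perm 'I_k}) (o : 'I_k) : bool :=
  [forall j, (j \in porbit s o) ==> (o <= j)%N].

Definition orbit_mins (s : {perm 'I_k}) : seq 'I_k :=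
  [seq o <- enum 'I_k | orbit_min s o].

Definition orbit_tree (s : {perm 'I_k}) (o : 'I_k) : tree X :=
  let m := #|porbit s o| in
  let tau := [seq val ((s ^+ j)%g o) | j <- iota 1 m.-1] in
  skel Tl (size tau) tau (Tl o).

Definition Psi (s : {perm 'I_k}) : forest X :=
  [seq orbit_tree s o | o <- orbit_mins s].

End Psi.

(* Main.v *)
From Pilot Require Import Defs.
From Stdlib Require Import ClassicalEpsilon.
From HB Require Import structures.
From mathcomp Require Import all_boot all_order all_algebra all_fingroup.
From mathcomp Require Import zify.
Set Implicit Arguments.
Unset Strict Implicit.
Unset Printing Implicit Defensive.
Import GRing.Theory.
Local Open Scope ring_scope.

Lemma decPP (P : Prop) : reflect P (Pilot.Defs.decP P).
Proof. rewrite /Pilot.Defs.decP; case: excluded_middle_informative => h; by constructor. Qed.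

HB.instance Definition _ (X : Type) :=
  hasDecEq.Build (tree X) (fun t u => decPP (t = u)).

Section LinLemmas.
Variables (R : fieldType) (X : Type).
Implicit Types (v w : lin R X) (G H : forest X).

Lemma decP_eq G H : Pilot.Defs.decP (G = H) = (G == H).
Proof. by case: decPP => h; case: eqP. Qed.

Lemma coefE v G : coef v G = \sum_(p <- v) (if p.2 == G then p.1 else 0).
Proof. by rewrite /coef; apply: eq_bigr => p _; rewrite decP_eq. Qed.

Lemma coef_cat v w G : coef (v ++ w) G = coef v G + coef w G.
Proof. by rewrite /coef big_cat. Qed.

Lemma coef_scale c v G : coef (scale c v) G = c * coef v G.
Proof.
rewrite /coef /scale big_map mulr_sumr; apply: eq_bigr => p _ /=.
by case: ifP; rewrite ?mulr0.
Qed.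

Lemma coef_flatten (vs : seq (lin R X)) G :
  coef (flatten vs) G = \sum_(v <- vs) coef v G.
Proof.
elim: vs => [|v vs IH]; first by rewrite big_nil /coef big_nil.
by rewrite /= coef_cat big_cons IH.
Qed.

Lemma sum_flatten (vs : seq (lin R X)) (phi : forest X -> R) :
  \sum_(p <- flatten vs) p.1 * phi p.2 = \sum_(v <- vs) \sum_(p <- v) p.1 * phi p.2.
Proof.
elim: vs => [|v vs IH]; first by rewrite !big_nil.
by rewrite /= big_cat big_cons IH.
Qed.

Lemma sum_scale c v (phi : forest X -> R) :
  \sum_(p <- scale c v) p.1 * phi p.2 = c * \sum_(p <- v) p.1 * phi p.2.
Proof. by rewrite /scale big_map mulr_sumr; apply: eq_bigr => p _ /=; rewrite mulrA. Qed.

Lemma sum_expand v (phi : forest X -> R) (s : seq (forest X)) :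
  uniq s -> {subset map snd v <= s} ->
  \sum_(p <- v) p.1 * phi p.2 = \sum_(H <- s) coef v H * phi H.
Proof.
move=> Us sub.
under [RHS]eq_bigr => H _ do rewrite coefE mulr_suml.
rewrite exchange_big /=; apply: eq_big_seq => p pv.
have ps : p.2 \in s by apply: sub; apply: map_f.
rewrite (bigD1_seq p.2) //= eqxx big1 ?addr0 // => H /negbTE nH.
by rewrite eq_sym nH mul0r.
Qed.

Lemma sum_resp v w (phi : forest X -> R) :
  (forall H, coef v H = coef w H) ->
  \sum_(p <- v) p.1 * phi p.2 = \sum_(p <- w) p.1 * phi p.2.
Proof.
move=> e.
rewrite (@sum_expand v phi (undup (map snd v ++ map snd w))) ?undup_uniq //; last first.
  by move=> x xv; rewrite mem_undup mem_cat xv.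
rewrite (@sum_expand w phi (undup (map snd v ++ map snd w))) ?undup_uniq //; last first.
  by move=> x xv; rewrite mem_undup mem_cat xv orbT.
by apply: eq_bigr => H _; rewrite e.
Qed.

Lemma coef_graft_lin v S G :
  coef (graft_lin v S) G = \sum_(p <- v) p.1 * coef (graft1 R p.2 S) G.
Proof.
by rewrite /graft_lin coef_flatten big_map; apply: eq_bigr => p _; rewrite coef_scale.
Qed.

Lemma graft_lin_resp v w S G : (forall H, coef v H = coef w H) ->
  coef (graft_lin v S) G = coef (graft_lin w S) G.
Proof. move=> e; rewrite !coef_graft_lin; exact: (sum_resp (fun H => coef (graft1 R H S) G) e). Qed.

Lemma coef_graft_lin_flatten (I : Type) (r : seq I) (c : I -> R) (u : I -> lin R X) S G :
  coef (graft_lin (flatten [seq scale (c i) (u i) | i <- r]) S) G =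
  \sum_(i <- r) c i * coef (graft_lin (u i) S) G.
Proof.
rewrite coef_graft_lin (sum_flatten _ (fun H => coef (graft1 R H S) G)) big_map.
apply: eq_bigr => i _.
by rewrite (sum_scale _ _ (fun H => coef (graft1 R H S) G)) coef_graft_lin.
Qed.

Lemma coef_flatten_scale (I : Type) (r : seq I) (c : I -> R) (u : I -> lin R X) G :
  coef (flatten [seq scale (c i) (u i) | i <- r]) G = \sum_(i <- r) c i * coef (u i) G.
Proof. by rewrite coef_flatten big_map; apply: eq_bigr => i _; rewrite coef_scale. Qed.

Lemma graft_forest_rcons (F P : forest X) (y : tree X) :
  graft_forest R F (rcons P y) = graft_lin (graft_forest R F P) y.
Proof. by rewrite /graft_forest -cats1 foldl_cat. Qed.

End LinLemmas.
Local Close Scope ring_scope.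

Lemma foldr_minn_mem a w : foldr minn a w \in a :: w.
Proof.
elim: w => [|b w IH] /=; first by rewrite inE.
rewrite /minn; case: ifP => _; first by rewrite !inE eqxx orbT.
by move: IH; rewrite !inE => /orP[->|->]; rewrite ?orbT.
Qed.

Lemma foldr_minn_le a w j : j \in a :: w -> foldr minn a w <= j.
Proof.
elim: w j => [|b w IH] j /=; first by rewrite inE => /eqP ->.
rewrite !inE => /or3P[/eqP->|/eqP->|jw].
- by apply: (leq_trans (geq_minr b _)); apply: IH; rewrite inE eqxx.
- exact: geq_minl.
- by apply: (leq_trans (geq_minr b _)); apply: IH; rewrite inE jw orbT.
Qed.

Lemma min_unique (w : seq nat) m1 m2 : m1 \in w -> m2 \in w ->
  (forall j, j \in w -> m1 <= j) -> (forall j, j \in w -> m2 <= j) -> m1 = m2.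
Proof. by move=> h1 h2 l1 l2; apply/eqP; rewrite eqn_leq l1 // l2. Qed.

Lemma take_cat_le (T : Type) n (s1 s2 : seq T) : n <= size s1 -> take n (s1 ++ s2) = take n s1.
Proof.
rewrite take_cat leq_eqVlt => /orP[/eqP->|->] //.
by rewrite ltnn subnn take0 cats0 take_size.
Qed.

Lemma drop_cat_le (T : Type) n (s1 s2 : seq T) : n <= size s1 -> drop n (s1 ++ s2) = drop n s1 ++ s2.
Proof.
rewrite drop_cat leq_eqVlt => /orP[/eqP->|->] //.
by rewrite ltnn subnn drop0 drop_size.
Qed.

Lemma take_addn_cat (T : Type) n (s1 s2 : seq T) : take (size s1 + n) (s1 ++ s2) = s1 ++ take n s2.
Proof. by elim: s1 => //= a s1 ->. Qed.

Lemma drop_addn_cat (T : Type) n (s1 s2 : seq T) : drop (size s1 + n) (s1 ++ s2) = drop n s2.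
Proof. by elim: s1. Qed.

Section Skel.
Variables (X : Type) (d : tree X).

Fixpoint sk (n : nat) (w : seq nat) (ls : seq (tree X)) : tree X :=
  match n with
  | 0 => head d ls
  | n'.+1 =>
      match w with
      | [::] => head d ls
      | a :: _ =>
          let m := foldr minn a w in
          let i := index m w in
          Node (sk n' (take i w) (take i.+1 ls)) (sk n' (drop i.+1 w) (drop i.+1 ls))
      end
  end.

Lemma sk_nil n ls : sk n [::] ls = head d ls.
Proof. by case: n. Qed.

Lemma sk_step n w ls m : m \in w -> (forall j, j \in w -> m <= j) ->
  sk n.+1 w ls = Node (sk n (take (index m w) w) (take (index m w).+1 ls))
                      (sk n (drop (index m w).+1 w) (drop (index m w).+1 ls)).
Proof.
case: w => [//|a w] mw ml.
have e : foldr minn a (a :: w) = m.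
  apply: (min_unique (w := a :: w)) => //.
    by move: (foldr_minn_mem a (a :: w)); rewrite ?/m !inE orbA orbb.
  by move=> j jw; apply: foldr_minn_le; rewrite inE jw orbT.
by rewrite /= -[minn a _]/(foldr minn a (a :: w)) e.
Qed.

Lemma sk_fuel n1 n2 w ls : size w <= n1 -> size w <= n2 -> sk n1 w ls = sk n2 w ls.
Proof.
elim: n1 n2 w ls => [|n1 IH] n2 w ls h1 h2.
  by case: w h1 h2 => [|a w] //= _ _; case: n2.
case: w h1 h2 => [|a w] h1 h2; first by rewrite !sk_nil.
case: n2 h2 => [//|n2] h2 /=.
have iw : index (minn a (foldr minn a w)) (a :: w) < size (a :: w).
  rewrite index_mem /minn; case: ifP => _; first by rewrite inE eqxx.
  exact: foldr_minn_mem.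
set i := index _ (a :: w) in iw *.
have st : size (take i (a :: w)) <= size w.
  by rewrite size_take iw -ltnS.
have sd : size (drop i.+1 (a :: w)) <= size w.
  by rewrite size_drop /= subSS leq_subr.
congr Node; apply: IH; apply: leq_trans; eassumption.
Qed.

Lemma skel_step (T : nat -> tree X) n w lf m : m \in w -> (forall j, j \in w -> m <= j) ->
  skel T n.+1 w lf = Node (skel T n (take (index m w) w) lf)
                          (skel T n (drop (index m w).+1 w) (T m)).
Proof.
case: w => [//|a w] mw ml.
have e : foldr minn a (a :: w) = m.
  apply: (min_unique (w := a :: w)) => //.
    by move: (foldr_minn_mem a (a :: w)); rewrite ?/m !inE orbA orbb.
  by move=> j jw; apply: foldr_minn_le; rewrite inE jw orbT.
by rewrite /= -[minn a _]/(foldr minn a (a :: w)) e.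
Qed.

Lemma skel_sk (T : nat -> tree X) n w lf : skel T n w lf = sk n w (lf :: map T w).
Proof.
elim: n w lf => [|n IH] [|a w] lf //.
set m := foldr minn a (a :: w).
have mw : m \in a :: w.
  by move: (foldr_minn_mem a (a :: w)); rewrite ?/m !inE orbA orbb.
have ml : forall j, j \in a :: w -> m <= j.
  by move=> j jw; apply: foldr_minn_le; rewrite inE jw orbT.
rewrite (skel_step _ _ _ mw ml) (sk_step _ _ mw ml) !IH.
congr Node; first by rewrite /= map_take.
set i := index m (a :: w).
have -> : drop i.+1 (lf :: map T (a :: w)) = drop i (map T (a :: w)) by [].
rewrite -map_drop (drop_nth m) ?index_mem // nth_index //.
Qed.


Lemma sk_ins (k : nat) n u v ls1 x y ls2 :
  size u = size ls1 -> all (fun j => j < k) (u ++ v) -> size (u ++ v) <= n ->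
  sk n.+1 (u ++ k :: v) (ls1 ++ x :: y :: ls2) = sk n (u ++ v) (ls1 ++ Node x y :: ls2).
Proof.
elim: n u v ls1 x y ls2 => [|n IH] u v ls1 x y ls2 su ak sz.
  move: sz; rewrite leqn0 size_eq0 => /eqP uv.
  have [u0 v0] : u = [::] /\ v = [::].
    by have := congr1 size uv; rewrite size_cat /= => /eqP; rewrite addn_eq0 !size_eq0 => /andP[/eqP-> /eqP->].
  subst u v; case: ls1 su => //= _.
  by rewrite /minn ltnn /= eqxx /=.
case E: (u ++ v) => [|a w].
  have [u0 v0] : u = [::] /\ v = [::].
    by have := congr1 size E; rewrite size_cat /= => /eqP; rewrite addn_eq0 !size_eq0 => /andP[/eqP-> /eqP->].
  subst u v; case: ls1 su => //= _.
  by rewrite /minn ltnn /= eqxx /=.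
have [m mw ml] : exists2 m, m \in u ++ v & forall j, j \in u ++ v -> m <= j.
  exists (foldr minn a w); rewrite E; [exact: foldr_minn_mem | exact: foldr_minn_le].
have mk : m < k by move/allP: ak => /(_ _ mw).
have mwk : m \in u ++ k :: v by move: mw; rewrite !mem_cat inE => /orP[->|->]; rewrite ?orbT.
have mlk : forall j, j \in u ++ k :: v -> m <= j.
  move=> j; rewrite mem_cat inE => /or3P[ju|/eqP->|jv]; first by apply: ml; rewrite mem_cat ju.
    exact: ltnW.
  by apply: ml; rewrite mem_cat jv orbT.
rewrite (sk_step _ _ mwk mlk) -E (sk_step _ _ mw ml).
rewrite !index_cat [index m (k :: v)]/=.
have mnk : (k == m) = false by apply/negbTE; rewrite neq_ltn mk orbT.
rewrite mnk.
case: ifP => mu.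
- have iu : index m u < size u by rewrite index_mem.
  have iu' : index m u <= size u by apply: ltnW.
  have il : index m u < size ls1 by rewrite -su.
  have il' : index m u <= size ls1 by apply: ltnW.
  have hn : index m u < n.+1.
    by apply: (leq_trans iu); apply: leq_trans sz; rewrite size_cat leq_addr.
  rewrite (take_cat_le _ iu') (take_cat_le _ iu') (take_cat_le _ il) (take_cat_le _ il).
  rewrite (drop_cat_le _ iu) (drop_cat_le _ iu) (drop_cat_le _ il) (drop_cat_le _ il).
  have sz' : size (drop (index m u).+1 u ++ v) <= n.
    move: sz; rewrite !size_cat size_drop => sz.
    by rewrite -ltnS (leq_trans _ sz) // ltn_add2r -subSn // subSS leq_subr.
  rewrite IH ?size_drop ?su //; last first.
    by apply/allP => j; rewrite mem_cat => /orP[/mem_drop ju|jv]; apply: (allP ak); rewrite mem_cat ?ju ?jv ?orbT.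
  congr Node; apply: sk_fuel; rewrite size_take iu //.
  exact: ltnW hn.
- have mv : m \in v by move: mw; rewrite mem_cat mu.
  have jv : index m v < size v by rewrite index_mem.
  set j := index m v.
  have e1 : take (size u + j.+1) (u ++ k :: v) = u ++ k :: take j v.
    by rewrite take_addn_cat.
  have e2 : take (size u + j.+1).+1 (ls1 ++ x :: y :: ls2) = ls1 ++ x :: y :: take j ls2.
    by rewrite su -addnS take_addn_cat.
  have e3 : take (size u + j) (u ++ v) = u ++ take j v.
    by rewrite take_addn_cat.
  have e4 : take (size u + j).+1 (ls1 ++ Node x y :: ls2) = ls1 ++ Node x y :: take j ls2.
    by rewrite su -addnS take_addn_cat.
  have e5 : drop (size u + j.+1).+1 (u ++ k :: v) = drop j.+1 v.
    by rewrite -addnS drop_addn_cat.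
  have e6 : drop (size u + j.+1).+1 (ls1 ++ x :: y :: ls2) = drop j ls2.
    by rewrite su -!addnS drop_addn_cat.
  have e7 : drop (size u + j).+1 (u ++ v) = drop j.+1 v.
    by rewrite -addnS drop_addn_cat.
  have e8 : drop (size u + j).+1 (ls1 ++ Node x y :: ls2) = drop j ls2.
    by rewrite su -addnS drop_addn_cat.
  rewrite e1 e2 e3 e4 e5 e6 e7 e8.
  move: sz; rewrite size_cat => sz.
  rewrite IH //; last first.
    by rewrite size_cat size_take jv -ltnS (leq_trans _ sz) // ltn_add2l.
    by apply/allP => i; rewrite mem_cat => /orP[iu|/mem_take iv]; apply: (allP ak); rewrite mem_cat ?iu ?iv ?orbT.
  congr Node; apply: sk_fuel.
  + by rewrite size_drop; lia.
  + by rewrite size_drop; lia.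
Qed.

End Skel.

Section Cyc.
Variable (T : finType).
Implicit Types (s : {perm T}) (o x : T).

Definition cyc s o := traject s o #|porbit s o|.

Lemma cyc_uniq s o : uniq (cyc s o).
Proof. exact: uniq_traject_porbit. Qed.

Lemma cyc_mem s o x : (x \in cyc s o) = (x \in porbit s o).
Proof. by rewrite porbit_traject. Qed.

Lemma cyc_cons s o : exists l, cyc s o = o :: l.
Proof.
rewrite /cyc; case def: #|porbit s o| => [|n].
  by move: (card_porbit_neq0 s o); rewrite def.
by rewrite trajectS; eexists.
Qed.

Lemma cyc_cycle s o : fcycle s (cyc s o).
Proof.
rewrite /cyc; case def: #|porbit s o| => [|n].
  by move: (card_porbit_neq0 s o); rewrite def.
have io := iter_porbit s o; rewrite def in io.
rewrite trajectS /=.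
have -> : rcons (traject s (s o) n) o = traject s (s o) n.+1.
  by rewrite trajectSr -iterSr io.
exact: fpath_traject.
Qed.

Lemma cyc_char s o l : uniq (o :: l) -> fcycle s (o :: l) -> cyc s o = o :: l.
Proof.
move=> U C.
have E := fcycle_consE C.
have memP : porbit s o =i o :: l.
  move=> x; apply/porbitP/idP => [[i ->]|].
    rewrite permX; elim: i => [|i IH] /=; first by rewrite inE eqxx.
    exact: (mem_fcycle C).
  rewrite E => /trajectP[i _ ->]; exists i; by rewrite permX.
have cd : #|porbit s o| = size (o :: l).
  by rewrite (eq_card memP); apply/card_uniqP.
by rewrite /cyc cd [RHS]E.
Qed.

Lemma cyc_char' s o p l : p = o :: l -> uniq p -> fcycle s p -> cyc s o = p.
Proof. by move=> ->; apply: cyc_char. Qed.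

End Cyc.

Section Ins.
Variable k : nat.
Local Notation L := (@lift k.+1 ord_max).
Local Notation m := (@ord_max k).

Definition lp (s : {perm 'I_k}) : {perm 'I_k.+1} := lift_perm ord_max ord_max s.
Definition ins (s : {perm 'I_k}) (c : 'I_k.+1) : {perm 'I_k.+1} := tperm c ord_max * lp s.

Lemma valL (x : 'I_k) : val (L x) = val x.
Proof. exact: lift_max. Qed.

Lemma L_neq_m (x : 'I_k) : (L x == m) = false.
Proof. by apply/negbTE; rewrite eq_sym neq_lift. Qed.

Lemma lpL s x : lp s (L x) = L (s x).
Proof. exact: lift_perm_lift. Qed.

Lemma lpm s : lp s m = m.
Proof. exact: lift_perm_id. Qed.

Lemma insL s c x : ins s c (L x) = if L x == c then m else L (s x).
Proof.
rewrite permM; case: tpermP => [E|E|xc xm].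
- by rewrite E lpm eqxx.
- by move: (L_neq_m x); rewrite E eqxx.
- by rewrite lpL; move/eqP/negbTE: xc => ->.
Qed.

Lemma ins_c s c : ins s c c = m.
Proof. by rewrite permM tpermL lpm. Qed.

Lemma ins_m s c : ins s c m = lp s c.
Proof. by rewrite permM tpermR. Qed.

Lemma ins_max s : ins s m = lp s.
Proof. by rewrite /ins tperm1 mul1g. Qed.

Lemma ins_inj : injective (fun p : {perm 'I_k} * 'I_k.+1 => ins p.1 p.2).
Proof.
move=> [s1 c1] [s2 c2] /= E.
have ec : c1 = c2.
  apply: (perm_inj (s := ins s1 c1)); rewrite ins_c E ins_c //.
subst c2.
have E2 : lp s1 = lp s2 by move: E; rewrite /ins => /mulgI.
congr pair; apply/permP => x; apply: (@lift_inj _ ord_max).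
by rewrite -!lpL E2.
Qed.

Lemma cyc_lpL s o : cyc (lp s) (L o) = map L (cyc s o).
Proof.
have [l E] := cyc_cons s o.
apply: (cyc_char' (l := map L l)); first by rewrite E.
  by rewrite map_inj_uniq ?cyc_uniq //; apply: lift_inj.
rewrite cycle_map (@eq_cycle _ _ (frel s)) ?cyc_cycle // => x y /=.
by rewrite lpL (inj_eq lift_inj).
Qed.

Lemma cyc_lpm s : cyc (lp s) m = [:: m].
Proof. by apply: cyc_char => //=; rewrite lpm eqxx. Qed.

Lemma cyc_ins_out s (c o : 'I_k) : c \notin cyc s o ->
  cyc (ins s (L c)) (L o) = map L (cyc s o).
Proof.
move=> nc; have [l E] := cyc_cons s o.
apply: (cyc_char' (l := map L l)); first by rewrite E.
  by rewrite map_inj_uniq ?cyc_uniq //; apply: lift_inj.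
rewrite cycle_map; have := cyc_cycle s o.
rewrite (@eq_in_cycle _ [pred x | x != c] (relpre L (frel (ins s (L c)))) (frel s)) //.
  move=> x y /= xc _; rewrite insL.
  have -> : (L x == L c) = false by rewrite (inj_eq lift_inj); exact: negbTE.
  by rewrite (inj_eq lift_inj).
by apply/allP => x /= xin; apply: contraNneq nc => <-.
Qed.

Lemma path_L s (c : 'I_k) x p : c \notin belast x p ->
  path (frel (ins s (L c))) (L x) (map L p) = path (frel s) x p.
Proof.
elim: p x => [|y p IH] x //=; rewrite inE negb_or => /andP[xc hp].
rewrite insL; have -> : (L x == L c) = false by rewrite (inj_eq lift_inj) eq_sym; exact: negbTE.
by rewrite IH // (inj_eq lift_inj).
Qed.

Lemma cyc_ins_in s (c o : 'I_k) B v : cyc s o = B ++ c :: v ->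
  cyc (ins s (L c)) (L o) = map L B ++ L c :: m :: map L v.
Proof.
move=> E.
have U := cyc_uniq s o; have C := cyc_cycle s o; rewrite E in U C.
have [l E'] := cyc_cons s o.
have ho : o = head c B.
  by move: E U C; rewrite E'; case: (B) => [|b B'] /=; case=> -> _ _ _.
have Ur : uniq (c :: (v ++ B)) by rewrite -cat_cons uniq_catC.
have Cr : fcycle s (c :: (v ++ B)) by rewrite -cat_cons cycle_catC.
move: Ur Cr; set r := v ++ B => Ur Cr.
apply: (cyc_char' (l := behead (map L B ++ L c :: m :: map L v))).
- by rewrite ho; case: (B).
- rewrite uniq_catC /= -map_cat -/r.
  move: Ur => /= /andP[cr Ur].
  rewrite inE L_neq_m /= (mem_map lift_inj) cr /=.
  rewrite map_inj_uniq ?Ur ?andbT; last exact: lift_inj.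
  by apply/mapP => -[x _] /esym/eqP; rewrite L_neq_m.
- rewrite cycle_catC /= -map_cat -/r.
  rewrite ins_c eqxx /= -map_rcons.
  move: Cr Ur => /=; case: r => [|r0 r'] /=.
    by rewrite ins_m lpL (inj_eq lift_inj).
  rewrite ins_m lpL (inj_eq lift_inj) => /andP[-> P] /andP[cr _] /=.
  by rewrite path_L // belast_rcons.
Qed.

End Ins.


Section Psi2.
Variable X : Type.

Definition omin n (s : {perm 'I_n}) (o : 'I_n) : bool :=
  [forall j, (j \in porbit s o) ==> (o <= j)%N].
Definition omins n (s : {perm 'I_n}) : seq 'I_n := [seq o <- enum 'I_n | omin s o].
Definition otree n (T : nat -> tree X) (s : {perm 'I_n}) (o : 'I_n) : tree X :=
  let m := #|porbit s o| in
  let tau := [seq val ((s ^+ j)%g o) | j <- iota 1 m.-1] in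
  skel T (size tau) tau (T o).
Definition Psi' n (T : nat -> tree X) (s : {perm 'I_n}) : forest X :=
  [seq otree T s o | o <- omins s].

Lemma Psi_Psi' (t0 : tree X) (F' : forest X) (s : {perm 'I_(size F')}) :
  Psi t0 s = Psi' (Tl t0 F') s.
Proof. by []. Qed.

Lemma omin_cyc n (s : {perm 'I_n}) o : omin s o = all (fun j : 'I_n => o <= j) (cyc s o).
Proof.
rewrite /omin; apply/forallP/allP => h j.
  by rewrite cyc_mem => jo; exact: (implyP (h j) jo).
by apply/implyP; rewrite -cyc_mem; exact: h.
Qed.

Lemma traj_iota n (s : {perm 'I_n}) x i n0 :
  traject s ((s ^+ i)%g x) n0 = [seq (s ^+ j)%g x | j <- iota i n0].
Proof.
elim: n0 i => //= n0 IH i; rewrite -IH; congr (_ :: traject _ _ _).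
by rewrite expgSr permM.
Qed.

Definition SK (d : tree X) (T : nat -> tree X) (w : seq nat) : tree X :=
  sk d (size w).-1 (behead w) (map T w).

Lemma otree_SK d n (T : nat -> tree X) (s : {perm 'I_n}) o :
  otree T s o = SK d T (map val (cyc s o)).
Proof.
rewrite /otree /cyc; case def: #|porbit s o| => [|n0].
  by move: (card_porbit_neq0 s o); rewrite def.
rewrite trajectS (skel_sk d) /SK /=.
have e : [seq val ((s ^+ j)%g o) | j <- iota 1 n0] = map val (traject s (s o) n0).
  by have := traj_iota s o 1 n0; rewrite expg1 => ->; rewrite -map_comp.
by rewrite e !size_map size_traject.
Qed.

Lemma SK_eq_in d (T T' : nat -> tree X) w : {in w, T =1 T'} -> SK d T w = SK d T' w.
Proof. by move=> h; rewrite /SK; congr sk; apply/eq_in_map. Qed.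

Definition upd (T : nat -> tree X) (c : nat) (t : tree X) : nat -> tree X :=
  fun n => if n == c then t else T n.

Lemma SK_ins d (T : nat -> tree X) a b (c kk : nat) :
  c \notin a ++ b -> all (fun j => j < kk) (a ++ c :: b) ->
  SK d T (a ++ c :: kk :: b) = SK d (upd T c (Node (T c) (T kk))) (a ++ c :: b).
Proof.
move=> nc ak.
have mapE : map (upd T c (Node (T c) (T kk))) (a ++ c :: b) = map T a ++ Node (T c) (T kk) :: map T b.
  rewrite map_cat /=; congr (_ ++ _ :: _); first (apply/eq_in_map => x xin; rewrite /upd).
  - by case: eqP => // ex; move: nc; rewrite mem_cat -ex xin.
  - by rewrite /upd eqxx.
  - apply/eq_in_map => x xin; rewrite /upd.
    by case: eqP => // ex; move: nc; rewrite mem_cat -ex xin orbT.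
have ak' : all (fun j => j < kk) (a ++ b).
  by apply/allP => j; rewrite mem_cat => /orP[ja|jb]; apply: (allP ak); rewrite mem_cat ?ja //= inE jb !orbT.
rewrite /SK mapE.
case: a nc ak ak' mapE => [|a0 a'] nc ak ak' mapE /=.
  exact: (@sk_ins X d kk (size b) [::] b [::] (T c) (T kk) (map T b)).
have e1 : a' ++ c :: kk :: b = rcons a' c ++ kk :: b by rewrite cat_rcons.
have e2 : T a0 :: map T a' ++ T c :: T kk :: map T b =
   (T a0 :: map T a') ++ T c :: T kk :: map T b by [].
have e3 : T a0 :: map T a' ++ Node (T c) (T kk) :: map T b =
   (T a0 :: map T a') ++ Node (T c) (T kk) :: map T b by [].
have e4 : size (a' ++ c :: kk :: b) = (size (rcons a' c ++ b)).+1.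
  by rewrite !size_cat size_rcons /=; lia.
have e5 : size (a' ++ c :: b) = size (rcons a' c ++ b).
  by rewrite !size_cat size_rcons /=; lia.
have e6 : a' ++ c :: b = rcons a' c ++ b by rewrite cat_rcons.
rewrite map_cat /= e4 e5 e1 e2 e6.
apply: sk_ins => //.
  by rewrite size_rcons /= size_map.
by rewrite cat_rcons; move: ak => /= /andP[].
Qed.


Section PsiIns.
Variable k : nat.
Local Notation L := (@lift k.+1 ord_max).
Local Notation m := (@ord_max k).

Lemma bump_ord (x : 'I_k) : bump k x = x.
Proof. by rewrite /bump leqNgt ltn_ord. Qed.

Lemma omin_lpL (s : {perm 'I_k}) o : omin (lp s) (L o) = omin s o.
Proof.
rewrite !omin_cyc cyc_lpL all_map; apply: eq_all => j /=; by rewrite !bump_ord.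
Qed.

Lemma omin_lpm (s : {perm 'I_k}) : omin (lp s) m.
Proof. by rewrite omin_cyc cyc_lpm /= leqnn. Qed.

Lemma cyc_split (s : {perm 'I_k}) (c o : 'I_k) : c \in cyc s o ->
  exists B v, cyc s o = B ++ c :: v.
Proof. by case/splitPr => B v; exists B, v. Qed.

Lemma omin_insL (s : {perm 'I_k}) c o : omin (ins s (L c)) (L o) = omin s o.
Proof.
rewrite !omin_cyc; case: (boolP (c \in cyc s o)) => hc.
  have [B [v E]] := cyc_split hc.
  rewrite (cyc_ins_in E) E !all_cat /= !all_map /= ?bump_ord.
  have -> : (o <= k)%N by apply: ltnW.
  rewrite andTb; congr andb; first by apply: eq_all => j /=; rewrite bump_ord.
  congr andb; apply: eq_all => j /=; by rewrite bump_ord.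
rewrite (cyc_ins_out hc) all_map; apply: eq_all => j /=; by rewrite ?lift_max ?bump_ord.
Qed.

Lemma omin_insm (s : {perm 'I_k}) c : omin (ins s (L c)) m = false.
Proof.
apply/negbTE/negP => /forallP /(_ (L c)) /implyP H.
have : L c \in porbit (ins s (L c)) m.
  by rewrite porbit_sym; have := mem_porbit (ins s (L c)) 1 (L c); rewrite expg1 ins_c.
by move/H; rewrite lift_max /= leqNgt ltn_ord.
Qed.

Lemma enum_split : enum 'I_k.+1 = rcons (map L (enum 'I_k)) m.
Proof.
rewrite enum_ordSr; congr rcons; apply: eq_map => i; apply: val_inj.
by rewrite /= bump_ord.
Qed.

Lemma omins_lp (s : {perm 'I_k}) : omins (lp s) = rcons (map L (omins s)) m.
Proof.
rewrite /omins enum_split filter_rcons omin_lpm filter_map; congr rcons; congr map.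
by apply: eq_filter => o /=; rewrite omin_lpL.
Qed.

Lemma omins_ins (s : {perm 'I_k}) c : omins (ins s (L c)) = map L (omins s).
Proof.
rewrite /omins enum_split filter_rcons omin_insm filter_map; congr map.
by apply: eq_filter => o /=; rewrite omin_insL.
Qed.

Lemma Psi'_lp (T : nat -> tree X) (s : {perm 'I_k}) :
  Psi' T (lp s) = rcons (Psi' T s) (T k).
Proof.
rewrite /Psi' omins_lp map_rcons -map_comp; congr rcons.
  apply: eq_map => o /=; rewrite !(otree_SK (T 0)) cyc_lpL -map_comp; congr SK.
  by apply: eq_map => x /=; rewrite bump_ord.
by rewrite (otree_SK (T 0)) cyc_lpm.
Qed.

Lemma Psi'_ins (T : nat -> tree X) (s : {perm 'I_k}) (c : 'I_k) :
  Psi' T (ins s (L c)) = Psi' (upd T c (Node (T c) (T k))) s.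
Proof.
rewrite /Psi' omins_ins -map_comp; apply: eq_map => o /=; rewrite !(otree_SK (T 0)).
case: (boolP (c \in cyc s o)) => hc.
  have [B [v E]] := cyc_split hc.
  have U := cyc_uniq s o; rewrite E in U.
  rewrite (cyc_ins_in E) E !map_cat /= -!map_comp bump_ord.
  have eB : map (@nat_of_ord k.+1 \o L) B = map (@nat_of_ord k) B.
    by apply: eq_map => x /=; rewrite bump_ord.
  have eV : map (@nat_of_ord k.+1 \o L) v = map (@nat_of_ord k) v.
    by apply: eq_map => x /=; rewrite bump_ord.
  rewrite eB eV.
  apply: SK_ins.
    rewrite -map_cat (mem_map val_inj).
    by move: U; rewrite uniq_catC /= => /andP[h _]; rewrite mem_cat orbC -mem_cat.
  by apply/allP => j; rewrite mem_cat inE => /or3P[/mapP[x _ ->]|/eqP->|/mapP[x _ ->]]; exact: ltn_ord.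
rewrite (cyc_ins_out hc) -map_comp.
have -> : [seq val (L x) | x <- cyc s o] = map val (cyc s o) by apply: eq_map => x /=; rewrite bump_ord.
apply: SK_eq_in => x /mapP [y yin ->]; rewrite /upd.
case: eqP => // /val_inj ey; by move: hc; rewrite -ey yin.
Qed.

End PsiIns.
End Psi2.

Local Open Scope ring_scope.

Section Main.
Variables (R : fieldType) (X : Type).

Lemma starn_rcons n (f g : forest X) y :
  starn R n.+1 f (rcons g y) = graft_lin (starn R n f g) y ++
    lopp (flatten [seq scale p.1 (starn R n f p.2) | p <- graft1 R g y]).
Proof. by rewrite /= rev_rcons revK. Qed.

Definition sgn n (s : {perm 'I_n}) : R := (-1) ^+ (#|porbits s| + n)%N.

Lemma sgn_odd n (s : {perm 'I_n}) : sgn s = (-1) ^+ (odd_perm s).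
Proof. by rewrite /sgn -signr_odd /odd_perm card_ord oddD addbC. Qed.

Lemma sgn_ins k (s : {perm 'I_k}) (c : 'I_k.+1) :
  sgn (ins s c) = (if c == ord_max then 1 else -1) * sgn s.
Proof.
rewrite !sgn_odd /ins odd_mul_tperm /lp odd_lift_perm addbb addFb signr_addb.
by case: eqP => _ /=; rewrite ?expr0 ?expr1.
Qed.

Lemma mkseqS0 (f : nat -> tree X) n : mkseq f n.+1 = f 0%N :: mkseq (fun i => f i.+1) n.
Proof. by rewrite /mkseq /= -[1%N]/(1 + 0)%N iotaDl -map_comp. Qed.

Lemma graft1_mkseq (T : nat -> tree X) n y :
  graft1 R (mkseq T n) y = [seq (1, mkseq (upd T c (Node (T c) y)) n) | c <- iota 0 n].
Proof.
elim: n T => [//|n IH] T.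
rewrite mkseqS0 /= IH -[1%N]/(1 + 0)%N iotaDl -!map_comp /=.
congr (_ :: _).
  congr (_, _); rewrite mkseqS0 /upd eqxx; congr (_ :: _); apply: eq_mkseq => i //.
apply: eq_map => c /=; rewrite mkseqS0 /upd /=; congr (_, _ :: _).
Qed.

Lemma card_pair k : #|{: {perm 'I_k} * 'I_k.+1}| = #|{perm 'I_k.+1}|.
Proof. by rewrite card_prod !card_Sn card_ord factS mulnC. Qed.

Lemma sum_perm_ins k (f : {perm 'I_k.+1} -> R) :
  \sum_(s : {perm 'I_k.+1}) f s = \sum_(s : {perm 'I_k}) \sum_(c : 'I_k.+1) f (ins s c).
Proof.
have bij : bijective (fun p : {perm 'I_k} * 'I_k.+1 => ins p.1 p.2).
  by apply: inj_card_bij; [exact: ins_inj | rewrite card_pair].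
rewrite (reindex (fun p : {perm 'I_k} * 'I_k.+1 => ins p.1 p.2)); last first.
  by case: bij => g h1 h2; exists g => x _; [apply: h1 | apply: h2].
by rewrite pair_bigA.
Qed.

Lemma starnE k (T : nat -> tree X) F : starn R k F (mkseq T k) = star R F (mkseq T k).
Proof. by rewrite /star size_mkseq. Qed.

Theorem main k : forall (T : nat -> tree X) (F : forest X) G,
  coef (star R F (mkseq T k)) G =
  \sum_(s : {perm 'I_k}) sgn s * coef (graft_forest R F (Psi' T s)) G.
Proof.
elim: k => [|k IH] T F G.
  rewrite (big_pred1 1%g); last by move=> s; apply/esym/eqP/permP => -[].
  have -> : Psi' T (1%g : {perm 'I_0}) = [::].
    by rewrite /Psi' /omins; have -> : enum 'I_0 = [::] by apply/nilP; rewrite /nilp size_enum_ord.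
  by rewrite sgn_odd odd_perm1 expr0 mul1r.
rewrite /star size_mkseq mkseqS starn_rcons coef_cat /lopp coef_scale coef_flatten big_map.
have IH' := IH T F.
rewrite (@graft_lin_resp R X _ (flatten [seq scale (sgn s) (graft_forest R F (Psi' T s)) | s <- enum {perm 'I_k}])); last first.
  by move=> H; rewrite starnE IH' coef_flatten_scale big_enum.
rewrite coef_graft_lin_flatten big_enum /=.
rewrite graft1_mkseq big_map.
have -> : iota 0 k = index_iota 0 k by rewrite /index_iota subn0.
rewrite big_mkord.
rewrite [X in -1 * X](eq_bigr (fun c : 'I_k => \sum_(s : {perm 'I_k}) sgn s * coef (graft_forest R F (Psi' (upd T c (Node (T c) (T k))) s)) G)); last first.
  by move=> c _; rewrite /= coef_scale mul1r starnE IH.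
rewrite sum_perm_ins.
under [RHS]eq_bigr => s _ do rewrite big_ord_recr /=.
rewrite big_split /= addrC; congr (_ + _).
  apply: eq_bigr => s _.
  by rewrite sgn_ins eqxx mul1r ins_max Psi'_lp graft_forest_rcons.
rewrite exchange_big mulr_sumr; apply: eq_bigr => s _; rewrite mulr_sumr; apply: eq_bigr => c _.
have -> : widen_ord (leqnSn k) c = lift ord_max c by apply: val_inj; rewrite /= bump_ord.
rewrite sgn_ins L_neq_m Psi'_ins.
by rewrite !mulrA mulN1r.
Qed.

End Main.

Theorem corollary4p4 (R : fieldType) (X : Type) (F : forest X)
    (T1 : tree X) (Ts : seq (tree X)) :
  let F' := T1 :: Ts in
  lin_eq (star R F F')
    (flatten [seq scale ((-1) ^+ (#|porbits s| + size F')%N)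
                        (graft_forest R F (Psi T1 s))
             | s : {perm 'I_(size F')}]).
Proof.
move=> F' G.
have := @main R X (size F') (nth T1 F') F G; rewrite mkseq_nth => ->.
rewrite /image_mem coef_flatten big_map big_enum /=.
by apply: eq_bigr => s _; rewrite coef_scale.
Qed.
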